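(* Let $L_0<L_1$, $\varepsilon>0$, and for $h=\frac{L_1-L_0}{J}$ ($J\in\mathbb{N}^*$) let the time step $l=l(h)>0$ satisfy $l=o(h^{2+\varepsilon})$ as $h\to0$; set $\sigma=\frac{2l}{h^2}$. Let $(\alpha_n)_n$ be a sequence in $[0,1]$ and let $A_n\in\mathcal{M}_{J+1}(\mathbb{C})$ be the tridiagonal matrix (indices $0,\dots,J$) with $A_n(j,j)=\frac{i-4\sigma\alpha_n}{2}$, $A_n(j,j-1)=A_n(j,j+1)=\sigma\alpha_n$, except $A_n(0,1)=A_n(J,J-1)=2\sigma\alpha_n$, other entries zero. Let $\mathcal{L}_{A_n}(X)=A_nX+XA_n^T$. Then there is a constant $C>0$ such that for $h$ small enough, for all $n$ and all $X\in\mathcal{M}_{J+1}(\mathbb{R})$, $$\frac12\|X\|\leq(1-Ch^{\varepsilon})\|X\|\leq\|\mathcal{L}_{A_n}(X)\|\leq(1+Ch^{\varepsilon})\|X\|\leq\frac32\|X\|.$$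
   Context: $\|\cdot\|$ denotes the matrix norm used in the paper (e.g. the Frobenius norm $\|X\|=(\sum_{j,m}|X_{j,m}|^2)^{1/2}$). $A_n$ is the matrix multiplying the new time level in a finite-difference scheme for the 2D NLS equation with Neumann boundary conditions. *)

(* Defs.v *)
From HB Require Import structures.
From mathcomp Require Import all_boot all_order all_algebra.
From mathcomp Require Import complex.
From mathcomp Require Import all_classical all_reals all_analysis.
Set Implicit Arguments. Unset Strict Implicit. Unset Printing Implicit Defensive.
Import Order.TTheory GRing.Theory Num.Theory.
Local Open Scope ring_scope.
Local Open Scope complex_scope.

Definition frob (R : realType) (m n : nat) (X : 'M[R[i]]_(m, n)) : R :=
  Num.sqrt (\sum_(j < m) \sum_(k < n) (complex.Re (X j k) ^+ 2 + complex.Im (X j k) ^+ 2)).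

Definition cplx_mx (R : realType) (m n : nat) (X : 'M[R]_(m, n)) : 'M[R[i]]_(m, n) :=
  map_mx (fun x => x%:C) X.

Definition Amat (R : realType) (J : nat) (sigma alpha : R) : 'M[R[i]]_(J.+1) :=
  \matrix_(j < J.+1, k < J.+1)
    if j == k :> nat then ('i - (4 * sigma * alpha)%:C) / 2%:R
    else if (k == j.+1 :> nat) then
      (if j == 0 :> nat then (2 * sigma * alpha)%:C else (sigma * alpha)%:C)
    else if (j == k.+1 :> nat) then
      (if j == J :> nat then (2 * sigma * alpha)%:C else (sigma * alpha)%:C)
    else 0.

Definition LA (R : realType) (n : nat) (A X : 'M[R[i]]_n) : 'M[R[i]]_n :=
  A *m X + X *m A^T.

(* Main.v *)
Require Import Defs.
From HB Require Import structures.
From mathcomp Require Import all_boot all_order all_algebra.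
From mathcomp Require Import complex.
From mathcomp Require Import all_classical all_reals all_analysis.
From mathcomp Require Import ring lra.
Import Order.TTheory GRing.Theory Num.Theory.
Local Open Scope ring_scope.
Local Open Scope complex_scope.

Section S.
Variable R : realType.

Definition Mr (J : nat) : 'M[R]_(J.+1) :=
  \matrix_(j < J.+1, k < J.+1)
    if j == k :> nat then -2
    else if (k == j.+1 :> nat) then
      (if j == 0 :> nat then 2 else 1)
    else if (j == k.+1 :> nat) then
      (if j == J :> nat then 2 else 1)
    else 0.

Lemma Amat_dec J (s a : R) :
  Amat J s a = ('i / 2%:R)%:M + map_mx (real_complex R) ((s * a) *: Mr J).
Proof.
apply/matrixP => j k; rewrite !mxE.
have [/val_inj E|ne] := eqVneq (j : nat) k.
  rewrite E !eqxx /=.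
  rewrite mulr1n !rmorphM rmorphN /= !rmorph_nat.
  by field.
have -> : (j == k) = false by apply/negbTE; apply: contra ne => /eqP ->.
rewrite mulr0n add0r.
case: ifP => _; first (case: ifP => _; congr (_%:C); ring).
case: ifP => _; last by rewrite mulr0.
case: ifP => _; congr (_%:C); ring.
Qed.

Lemma LA_dec J (s a : R) (X : 'M[R]_(J.+1)) :
  LA (Amat J s a) (cplx_mx X) =
  'i *: cplx_mx X + map_mx (real_complex R) ((s * a) *: (Mr J *m X + X *m (Mr J)^T)).
Proof.
have -> : cplx_mx X = map_mx (real_complex R) X by [].
rewrite /LA Amat_dec.
rewrite linearD /= tr_scalar_mx mulmxDl mulmxDr mul_scalar_mx mul_mx_scalar.
rewrite !map_mxZ map_mxD !map_mxM -map_trmx.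
rewrite -scalemxAl linearZ /= -scalemxAr scalerDr addrACA -scalerDl.
by congr (_ *: _ + _); field.
Qed.

Definition SS m n (Y : 'M[R]_(m, n)) := \sum_(j < m) \sum_(k < n) Y j k ^+ 2.

Arguments SS {m n}.

Lemma frob_cplx m n (X : 'M[R]_(m, n)) : frob (cplx_mx X) = Num.sqrt (SS X).
Proof.
rewrite /frob /SS; congr Num.sqrt; apply: eq_bigr => j _; apply: eq_bigr => k _.
rewrite !mxE /= expr0n addr0 //.
Qed.

Lemma frob_L J (s a : R) (X : 'M[R]_(J.+1)) :
  frob (LA (Amat J s a) (cplx_mx X)) =
  Num.sqrt (SS ((s * a) *: (Mr J *m X + X *m (Mr J)^T)) + SS X).
Proof.
rewrite LA_dec /frob /SS -big_split; congr Num.sqrt; apply: eq_bigr => j _.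
rewrite -big_split; apply: eq_bigr => k _.
rewrite !mxE /=; ring.
Qed.

Lemma pt_ineq (a a' x x' : R) :
  2 * (a * x * (a' * x')) <= `|a| * `|a'| * x' ^+ 2 + `|a| * `|a'| * x ^+ 2.
Proof.
set w := `|a| * `|a'|. set u := a * a'.
have h1 : u <= w by rewrite /u /w -normrM ler_norm.
have h2 : - u <= w by rewrite /u /w -normrM -normrN ler_norm.
have h3 : 0 <= (w + u) * (x - x') ^+ 2 by apply: mulr_ge0; [lra | exact: sqr_ge0].
have h4 : 0 <= (w - u) * (x + x') ^+ 2 by apply: mulr_ge0; [lra | exact: sqr_ge0].
have -> : a * x * (a' * x') = u * (x * x') by rewrite /u; ring.
nra.
Qed.

Lemma cs_w {n} (a x : 'I_n -> R) :
  (\sum_m a m * x m) ^+ 2 <= (\sum_m `|a m|) * \sum_m `|a m| * x m ^+ 2.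
Proof.
have E1 : (\sum_m a m * x m) ^+ 2 = \sum_m \sum_m' (a m * x m) * (a m' * x m').
  by rewrite expr2 mulr_suml; apply: eq_bigr => m _; rewrite mulr_sumr.
have E2 : (\sum_m `|a m|) * \sum_m `|a m| * x m ^+ 2 =
   \sum_m \sum_m' `|a m| * `|a m'| * x m' ^+ 2.
  by rewrite mulr_suml; apply: eq_bigr => m _; rewrite mulr_sumr;
     apply: eq_bigr => m' _; rewrite mulrA.
have E3 : \sum_(m < n) \sum_(m' < n) `|a m| * `|a m'| * x m' ^+ 2 =
   \sum_(m < n) \sum_(m' < n) `|a m| * `|a m'| * x m ^+ 2.
  rewrite exchange_big; apply: eq_bigr => m _; apply: eq_bigr => m' _.
  by rewrite (mulrC `|a m'|).
rewrite E1 E2.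
suff : 2 * \sum_m \sum_m' (a m * x m) * (a m' * x m') <=
   2 * \sum_m \sum_m' `|a m| * `|a m'| * x m' ^+ 2 by lra.
set T := \sum_m \sum_m' `|a m| * `|a m'| * x m' ^+ 2.
have -> : 2 * T = T + T by rewrite mulr_natl mulr2n.
rewrite {2}/T E3 -big_split mulr_sumr /=; apply: ler_sum => m _.
rewrite -big_split mulr_sumr /=; apply: ler_sum => m' _.
exact: pt_ineq.
Qed.

Lemma schur {n p} (M : 'M[R]_n) (X : 'M[R]_(n, p)) (r c : R) :
  0 <= r ->
  (forall j, \sum_m `|M j m| <= r) -> (forall m, \sum_j `|M j m| <= c) ->
  SS (M *m X) <= r * c * SS X.
Proof.
move=> r0 hr hc.
apply: (@le_trans _ _ (\sum_j \sum_k r * \sum_m `|M j m| * X m k ^+ 2)).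
  rewrite /SS; apply: ler_sum => j _; apply: ler_sum => k _; rewrite mxE.
  apply: (le_trans (cs_w (fun m => M j m) (fun m => X m k))); apply: ler_wpM2r; last exact: hr.
  by apply: sumr_ge0 => m _; apply: mulr_ge0; [exact: normr_ge0 | exact: sqr_ge0].
under eq_bigr do rewrite -mulr_sumr.
rewrite -mulr_sumr -mulrA; apply: ler_wpM2l => //.
under eq_bigr do rewrite exchange_big.
rewrite exchange_big /SS mulr_sumr; apply: ler_sum => m _.
rewrite exchange_big mulr_sumr; apply: ler_sum => k _.
under eq_bigr do rewrite mulrC.
rewrite -mulr_sumr mulrC; apply: ler_wpM2r; [exact: sqr_ge0 | exact: hc].
Qed.

Lemma SS_tr {n p} (X : 'M[R]_(n, p)) : SS X^T = SS X.
Proof. by rewrite /SS exchange_big; apply: eq_bigr => j _; apply: eq_bigr => k _; rewrite mxE. Qed.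
Lemma ind_sum n (P : pred 'I_n) c :
  (forall m, P m -> (m : nat) = c) -> \sum_m (P m)%:R <= 1 :> R.
Proof.
move=> hP.
apply: (@le_trans _ _ (\sum_(m < n) (((m : nat) == c)%:R : R))).
  apply: ler_sum => m _; case Pm: (P m) => /=; last by case: (_ == _).
  by rewrite (hP m Pm) eqxx.
rewrite (eq_bigr (fun m : 'I_n => if (m : nat) == c then (1 : R) else 0)); last first.
  by move=> m _; case: (_ == _).
rewrite -big_mkcond (big_ord1_eq _ (fun _ => (1:R))); case: ifP => _ //; exact: ler01.
Qed.

Lemma Mr_bound J (j m : 'I_J.+1) :
  `|Mr J j m| <= 2 * (((j : nat) == m)%:R + ((m : nat) == j.+1)%:R + ((j : nat) == m.+1)%:R).
Proof.
rewrite mxE.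
case: (j == m :> nat); case: (m == j.+1 :> nat); case: (j == m.+1 :> nat);
  case: (j == 0 :> nat); case: (j == J :> nat);
  rewrite /= ?normrN ?normr0 ?normr1 ?normr_nat; lra.
Qed.

Lemma Mr_row J (j : 'I_J.+1) : \sum_m `|Mr J j m| <= 6.
Proof.
apply: (@le_trans _ _ (\sum_(m < J.+1) (2:R) * (((j : nat) == m)%:R + ((m : nat) == j.+1)%:R
    + ((j : nat) == m.+1)%:R))).
  by apply: ler_sum => m _; exact: Mr_bound.
rewrite -mulr_sumr !big_split /=.
have h1 := @ind_sum _ (fun m : 'I_J.+1 => (j : nat) == m) j (fun m h => ltac:(by rewrite (eqP h))).
have h2 := @ind_sum _ (fun m : 'I_J.+1 => (m : nat) == j.+1) j.+1 (fun m h => ltac:(by rewrite (eqP h))).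
have h3 := @ind_sum _ (fun m : 'I_J.+1 => (j : nat) == m.+1) j.-1 (fun m h => ltac:(by rewrite (eqP h))).
simpl in h1, h2, h3; lra.
Qed.

Lemma Mr_col J (m : 'I_J.+1) : \sum_j `|Mr J j m| <= 6.
Proof.
apply: (@le_trans _ _ (\sum_(j < J.+1) (2:R) * (((j : nat) == m)%:R + ((m : nat) == j.+1)%:R
    + ((j : nat) == m.+1)%:R))).
  by apply: ler_sum => j _; exact: Mr_bound.
rewrite -mulr_sumr !big_split /=.
have h1 := @ind_sum _ (fun j : 'I_J.+1 => (j : nat) == m) m (fun j h => ltac:(by rewrite (eqP h))).
have h2 := @ind_sum _ (fun j : 'I_J.+1 => (m : nat) == j.+1) m.-1 (fun j h => ltac:(by rewrite (eqP h))).
have h3 := @ind_sum _ (fun j : 'I_J.+1 => (j : nat) == m.+1) m.+1 (fun j h => ltac:(by rewrite (eqP h))).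
simpl in h1, h2, h3; lra.
Qed.

Lemma SS_ge0 {m n} (Y : 'M[R]_(m, n)) : 0 <= SS Y.
Proof. by apply: sumr_ge0 => j _; apply: sumr_ge0 => k _; exact: sqr_ge0. Qed.

Lemma SS_scale {m n} c (Y : 'M[R]_(m, n)) : SS (c *: Y) = c ^+ 2 * SS Y.
Proof.
rewrite /SS mulr_sumr; apply: eq_bigr => j _; rewrite mulr_sumr.
by apply: eq_bigr => k _; rewrite mxE exprMn.
Qed.

Lemma SS_add {m n} (Y Z : 'M[R]_(m, n)) : SS (Y + Z) <= 2 * SS Y + 2 * SS Z.
Proof.
rewrite /SS !mulr_sumr -big_split; apply: ler_sum => j _.
rewrite !mulr_sumr -big_split; apply: ler_sum => k _; rewrite mxE.
rewrite -subr_ge0.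
have -> : 2 * Y j k ^+ 2 + 2 * Z j k ^+ 2 - (Y j k + Z j k) ^+ 2 = (Y j k - Z j k) ^+ 2 by ring.
exact: sqr_ge0.
Qed.

Lemma B_bound J c (X : 'M[R]_(J.+1)) :
  SS (c *: (Mr J *m X + X *m (Mr J)^T)) <= 144 * c ^+ 2 * SS X.
Proof.
rewrite SS_scale.
have h1 : SS (Mr J *m X) <= 6 * 6 * SS X.
  by apply: schur => //; [exact: Mr_row | exact: Mr_col].
have h2 : SS (X *m (Mr J)^T) <= 6 * 6 * SS X.
  rewrite -SS_tr trmx_mul trmxK -(SS_tr X).
  by apply: schur => //; [exact: Mr_row | exact: Mr_col].
have h3 := SS_add (Mr J *m X) (X *m (Mr J)^T).
have h4 := sqr_ge0 c.
have h5 := SS_ge0 X.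
have : SS (Mr J *m X + X *m (Mr J)^T) <= 144 * SS X by lra.
by rewrite -mulrA (mulrCA 144); apply: ler_wpM2l.
Qed.

End S.
Arguments SS {R m n}.

Local Close Scope complex_scope.

Theorem lemma4 (R : realType) (L0 L1 eps : R) (l : R -> R) (alpha : nat -> R) :
  L0 < L1 -> 0 < eps ->
  (forall h : R, 0 < h -> 0 < l h) ->
  (* l = o(h^(2+eps)) as h -> 0+ *)
  (forall delta : R, 0 < delta -> exists eta : R, 0 < eta /\
     forall h : R, 0 < h -> h < eta -> `|l h| <= delta * h `^ (2 + eps)) ->
  (forall n, 0 <= alpha n <= 1) ->
  exists C : R, 0 < C /\
    exists h0 : R, 0 < h0 /\
      forall J : nat, (0 < J)%N ->
        let h := (L1 - L0) / J%:R in
        h < h0 ->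
        let sigma := 2 * l h / h ^+ 2 in
        forall (n : nat) (X : 'M[R]_(J.+1)),
          let nX := frob (cplx_mx X) in
          let nL := frob (LA (Amat J sigma (alpha n)) (cplx_mx X)) in
          [/\ 1 / 2 * nX <= (1 - C * h `^ eps) * nX,
              (1 - C * h `^ eps) * nX <= nL,
              nL <= (1 + C * h `^ eps) * nX &
              (1 + C * h `^ eps) * nX <= 3 / 2 * nX].
Proof.
move=> hL heps hlpos hl halpha.
have [eta [eta0 heta]] := hl (1/24) ltac:(lra).
pose b := (1/2 : R) `^ (1/eps).
have b0 : 0 < b by apply: powR_gt0; lra.
have bpow : b `^ eps = 1/2.
  rewrite /b -powRrM (_ : 1 / eps * eps = 1); first by rewrite powRr1 //; lra.
  by field; rewrite (gt_eqF heps).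
exists 1; split; first lra.
exists (Order.min eta b); split; first by rewrite lt_min eta0 b0.
move=> J J0 h hh0 sigma n X nX nL.
have hpos : 0 < h by apply: divr_gt0; [lra | rewrite ltr0n].
have /andP [hlt_eta hlt_b] : (h < eta) && (h < b) by rewrite -lt_min.
set t := h `^ eps.
have t0 : 0 <= t by apply: powR_ge0.
have t_le : t <= 1/2.
  rewrite -bpow; apply: ge0_ler_powR; rewrite ?nnegrE; lra.
have lh0 := hlpos h hpos.
have h20 : 0 < h ^+ 2 by apply: exprn_gt0.
have sig0 : 0 < sigma by apply: divr_gt0 => //; lra.
have sig_le : 12 * sigma <= t.
  have hlh := heta h hpos hlt_eta.
  rewrite gtr0_norm // powRD in hlh; last by rewrite (gt_eqF hpos) implybT.
  rewrite powR_mulrn in hlh; last lra.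
  have -> : 12 * sigma = (24 * l h) / h ^+ 2 by rewrite /sigma; field; rewrite (gt_eqF hpos).
  by rewrite ler_pdivrMr //; rewrite -/t in hlh; lra.
rewrite /nX /nL frob_cplx frob_L.
set S := SS X.
set B := SS _.
have S0 : 0 <= S by apply: SS_ge0.
have B0 : 0 <= B by apply: SS_ge0.
have hB : B <= 144 * sigma ^+ 2 * S.
  apply: le_trans (B_bound _ _ _ _) _.
  have [a0 a1] := andP (halpha n).
  have : (sigma * alpha n) ^+ 2 <= sigma ^+ 2.
    rewrite exprMn -[X in _ <= X]mulr1; apply: ler_wpM2l; first exact: sqr_ge0.
    exact: exprn_ile1.
  move=> hsa; rewrite -/S; apply: ler_wpM2r => //; apply: ler_wpM2l => //.
have sq0 := sqrtr_ge0 S.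
have lo : Num.sqrt S <= Num.sqrt (B + S) by rewrite ler_sqrt; lra.
have up : Num.sqrt (B + S) <= (1 + 12 * sigma) * Num.sqrt S.
  rewrite -[1 + 12 * sigma]ger0_norm; last lra.
  rewrite -sqrtr_sqr -sqrtrM; last exact: sqr_ge0.
  rewrite ler_sqrt; last by apply: mulr_ge0 => //; exact: sqr_ge0.
  have : 0 <= sigma * S by apply: mulr_ge0 => //; lra.
  move=> hsS; nra.
split; nra.
Qed.
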